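(* Let $S$ be a commutative Hausdorff semitopological semigroup. Then $S^{Lmc}$ is not commutative if and only if there exist unbounded sequences $(x_n)$ and $(y_n)$ in $S$ such that $$\mathrm{cl}_{S^{Lmc}}\varepsilon(\{x_ky_n:k<n,\ k,n\in\mathbb{N}\})\cap\mathrm{cl}_{S^{Lmc}}\varepsilon(\{y_kx_n:k<n,\ k,n\in\mathbb{N}\})=\emptyset.$$
   Context: A Hausdorff semitopological semigroup is a semigroup $S$ with a Hausdorff topology such that all maps $\lambda_s(x)=sx$, $r_s(x)=xs$ are continuous. $\mathcal{CB}(S)$: bounded continuous complex functions with sup norm; $\beta S$ its spectrum with Gelfand topology; $L_sf(x)=f(sx)$, $(T_\mu f)(s)=\mu(L_sf)$; $Lmc(S)=\{f\in\mathcal{CB}(S):T_\mu f\in\mathcal{CB}(S)\ \forall \mu\in\beta S\}$. $S^{Lmc}$ is the spectrum of $Lmc(S)$ with the Gelfand topology and multiplication $\mu\nu=\mu\circ T_\nu$, where $(T_\nu f)(s)=\nu(L_sf)$ for $f\in Lmc(S)$; $\varepsilon:S\to S^{Lmc}$ is evaluation, $\varepsilon(s)(f)=f(s)$. $S^*=S^{Lmc}\setminus\varepsilon(S)$. A set $A\subseteq S$ is unbounded if $\mathrm{cl}_{S^{Lmc}}\varepsilon(A)\cap S^*\neq\emptyset$; a sequence $(x_n)$ is unbounded if $\{x_n:n\in\mathbb{N}\}$ is unbounded. *)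

(* Defs.v *)
From Stdlib Require Import Reals List.
Open Scope R_scope.

Definition C : Type := (R * R)%type.
Definition Cadd (z w : C) : C := (fst z + fst w, snd z + snd w).
Definition Csub (z w : C) : C := (fst z - fst w, snd z - snd w).
Definition Cmul (z w : C) : C :=
  (fst z * fst w - snd z * snd w, fst z * snd w + snd z * fst w).
Definition Cnorm (z : C) : R := sqrt (fst z * fst z + snd z * snd z).
Definition C0 : C := (0, 0).
Definition C1 : C := (1, 0).

Section Semigroup.
Variables (S : Type) (op : S -> S -> S) (open : (S -> Prop) -> Prop).

Definition is_topology : Prop :=
  open (fun _ => True) /\
  (forall U V, open U -> open V -> open (fun x => U x /\ V x)) /\
  (forall F : (S -> Prop) -> Prop, (forall U, F U -> open U) ->
     open (fun x => exists U, F U /\ U x)).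

Definition hausdorff : Prop :=
  forall x y : S, x <> y -> exists U V, open U /\ open V /\ U x /\ V y /\
    (forall z, ~ (U z /\ V z)).

Definition continuous_SS (g : S -> S) : Prop :=
  forall U, open U -> open (fun x => U (g x)).

Definition hausdorff_semitopological_semigroup : Prop :=
  is_topology /\ hausdorff /\
  (forall a b c, op (op a b) c = op a (op b c)) /\
  (forall s, continuous_SS (fun x => op s x)) /\
  (forall s, continuous_SS (fun x => op x s)).

Definition commutative : Prop := forall a b, op a b = op b a.

Definition continuous_C (f : S -> C) : Prop :=
  forall s eps, 0 < eps -> exists U, open U /\ U s /\
    forall x, U x -> Cnorm (Csub (f x) (f s)) < eps.

Definition bounded_C (f : S -> C) : Prop :=
  exists M, forall x, Cnorm (f x) <= M.

Definition CB (f : S -> C) : Prop := continuous_C f /\ bounded_C f.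

(** Points of the spectrum (Gelfand space) of a function algebra A:
    nonzero multiplicative linear functionals on A.  A functional is a map
    (S -> C) -> C; only its values on A are relevant. *)
Definition is_character (A : (S -> C) -> Prop) (mu : (S -> C) -> C) : Prop :=
  (forall f g, A f -> A g -> mu (fun x => Cadd (f x) (g x)) = Cadd (mu f) (mu g)) /\
  (forall (c : C) f, A f -> mu (fun x => Cmul c (f x)) = Cmul c (mu f)) /\
  (forall f g, A f -> A g -> mu (fun x => Cmul (f x) (g x)) = Cmul (mu f) (mu g)) /\
  (exists f, A f /\ mu f <> C0).

Definition Ls (s : S) (f : S -> C) : S -> C := fun x => f (op s x).
Definition Tmu (mu : (S -> C) -> C) (f : S -> C) : S -> C := fun s => mu (Ls s f).

(** beta S = spectrum of CB(S); Lmc(S) *)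
Definition Lmc (f : S -> C) : Prop :=
  CB f /\ forall mu, is_character CB mu -> CB (Tmu mu f).

Definition SLmc (mu : (S -> C) -> C) : Prop := is_character Lmc mu.

Definition Lmc_eq (mu nu : (S -> C) -> C) : Prop := forall f, Lmc f -> mu f = nu f.

Definition eps_map (s : S) : (S -> C) -> C := fun f => f s.

Definition Lmc_mul (mu nu : (S -> C) -> C) : (S -> C) -> C := fun f => mu (Tmu nu f).

Definition SLmc_commutative : Prop :=
  forall mu nu, SLmc mu -> SLmc nu -> Lmc_eq (Lmc_mul mu nu) (Lmc_mul nu mu).

(** mu lies in the closure, in the Gelfand (weak-star) topology of S^Lmc,
    of epsilon(A) *)
Definition in_cl_eps (A : S -> Prop) (mu : (S -> C) -> C) : Prop :=
  forall (fs : list (S -> C)), Forall Lmc fs -> forall e, 0 < e ->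
    exists a, A a /\ Forall (fun f => Cnorm (Csub (mu f) (eps_map a f)) < e) fs.

Definition in_Sstar (mu : (S -> C) -> C) : Prop :=
  SLmc mu /\ ~ exists s, Lmc_eq mu (eps_map s).

Definition unbounded_set (A : S -> Prop) : Prop :=
  exists mu, in_Sstar mu /\ in_cl_eps A mu.

Definition unbounded_seq (x : nat -> S) : Prop :=
  unbounded_set (fun s => exists n, s = x n).

End Semigroup.

(* Main.v *)
Require Import Defs.
From Stdlib Require Import Reals List Lra Psatz Classical FunctionalExtensionality ClassicalEpsilon Lia.
Require Import Defs.
From mathcomp Require ssreflect ssrbool boolp classical_sets filter.
Open Scope R_scope.

Definition Cconj (z : C) : C := (fst z, - snd z).
Definition Cinv (z : C) : C :=
  (fst z / (fst z * fst z + snd z * snd z), - snd z / (fst z * fst z + snd z * snd z)).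

Lemma C_eq (z w : C) : fst z = fst w -> snd z = snd w -> z = w.
Proof. destruct z, w; simpl; intros; subst; reflexivity. Qed.

Lemma Cnorm_ge0 z : 0 <= Cnorm z.
Proof. unfold Cnorm; apply sqrt_pos. Qed.

Lemma Cnorm_sq z : Cnorm z * Cnorm z = fst z * fst z + snd z * snd z.
Proof. unfold Cnorm; apply sqrt_sqrt; nra. Qed.

Lemma Cnorm_le_sq z r : 0 <= r -> fst z * fst z + snd z * snd z <= r * r -> Cnorm z <= r.
Proof. intros. unfold Cnorm. rewrite <- (sqrt_square r) by lra. apply sqrt_le_1_alt. lra. Qed.

Lemma Cnorm_ge_sq z r : 0 <= r -> r * r <= fst z * fst z + snd z * snd z -> r <= Cnorm z.
Proof. intros. unfold Cnorm. rewrite <- (sqrt_square r) by lra. apply sqrt_le_1_alt. lra. Qed.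

Lemma Cnorm_fst z : Rabs (fst z) <= Cnorm z.
Proof.
  assert (H:=Cnorm_sq z). assert (H0:=Cnorm_ge0 z).
  apply Rsqr_incr_0_var. unfold Rsqr. rewrite <- Rabs_mult, Rabs_right by nra. nra. auto.
Qed.
Lemma Cnorm_snd z : Rabs (snd z) <= Cnorm z.
Proof.
  assert (H:=Cnorm_sq z). assert (H0:=Cnorm_ge0 z).
  apply Rsqr_incr_0_var. unfold Rsqr. rewrite <- Rabs_mult, Rabs_right by nra. nra. auto.
Qed.
Lemma Cnorm_le_abs z : Cnorm z <= Rabs (fst z) + Rabs (snd z).
Proof.
  pose proof (Rabs_pos (fst z)); pose proof (Rabs_pos (snd z)).
  assert (Rabs (fst z) * Rabs (fst z) = fst z * fst z) by (rewrite <- Rabs_mult; apply Rabs_right; nra).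
  assert (Rabs (snd z) * Rabs (snd z) = snd z * snd z) by (rewrite <- Rabs_mult; apply Rabs_right; nra).
  apply Cnorm_le_sq; nra.
Qed.

Lemma sq_le x y : 0 <= y -> x * x <= y * y -> x <= y.
Proof. intros. destruct (Rle_dec x y); auto. nra. Qed.

Lemma Cnorm_mul z w : Cnorm (Cmul z w) = Cnorm z * Cnorm w.
Proof.
  unfold Cnorm, Cmul; simpl. rewrite <- sqrt_mult by nra. f_equal. ring.
Qed.

Lemma Cnorm_add z w : Cnorm (Cadd z w) <= Cnorm z + Cnorm w.
Proof.
  apply Cnorm_le_sq. pose proof (Cnorm_ge0 z); pose proof (Cnorm_ge0 w); lra.
  pose proof (Cnorm_sq z); pose proof (Cnorm_sq w);
  pose proof (Cnorm_ge0 z); pose proof (Cnorm_ge0 w).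
  destruct z as [a b], w as [c d]; simpl in *.
  assert (a*c + b*d <= Cnorm (a,b) * Cnorm (c,d)).
  { assert ((a*c+b*d)*(a*c+b*d) <= (Cnorm (a,b) * Cnorm (c,d))*(Cnorm (a,b) * Cnorm (c,d))).
    { replace ((Cnorm (a,b) * Cnorm (c,d))*(Cnorm (a,b) * Cnorm (c,d))) with
        ((a*a+b*b)*(c*c+d*d)) by (rewrite <- H, <- H0; ring). pose proof (Rle_0_sqr (a*d-b*c)); unfold Rsqr in *; nra. }
    apply sq_le; auto. apply Rmult_le_pos; auto. }
  nra.
Qed.

Lemma Cnorm_opp_sub z w : Cnorm (Csub z w) = Cnorm (Csub w z).
Proof. unfold Cnorm, Csub; simpl. f_equal; ring. Qed.

Lemma Cnorm_tri z w u : Cnorm (Csub z u) <= Cnorm (Csub z w) + Cnorm (Csub w u).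
Proof.
  replace (Csub z u) with (Cadd (Csub z w) (Csub w u)). apply Cnorm_add.
  unfold Cadd, Csub; apply C_eq; simpl; ring.
Qed.

Lemma Cnorm_eq0 z : Cnorm z = 0 -> z = C0.
Proof.
  intro H. pose proof (Cnorm_sq z). rewrite H in H0. destruct z as [a b]; simpl in *.
  unfold C0. apply C_eq; simpl; nra.
Qed.

Lemma Cnorm_C0 : Cnorm C0 = 0.
Proof. unfold Cnorm, C0; simpl. replace (0*0+0*0) with 0 by ring. apply sqrt_0. Qed.
Lemma Cnorm_C1 : Cnorm C1 = 1.
Proof. unfold Cnorm, C1; simpl. replace (1*1+0*0) with 1 by ring. apply sqrt_1. Qed.

Lemma Csub_eq0 z w : Cnorm (Csub z w) = 0 -> z = w.
Proof.
  intro H. apply Cnorm_eq0 in H. unfold Csub, C0 in H. injection H; intros.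
  apply C_eq; lra.
Qed.

Lemma Cnorm_small_eq z w : (forall e, 0 < e -> Cnorm (Csub z w) <= e) -> z = w.
Proof.
  intro H. apply Csub_eq0. pose proof (Cnorm_ge0 (Csub z w)).
  destruct (Req_dec (Cnorm (Csub z w)) 0) as [E|E]; auto.
  specialize (H (Cnorm (Csub z w) / 2)). lra.
Qed.

Lemma Cnorm_conj z : Cnorm (Cconj z) = Cnorm z.
Proof. unfold Cnorm, Cconj; simpl; f_equal; ring. Qed.

Lemma Cmul_inv z : z <> C0 -> Cmul z (Cinv z) = C1.
Proof.
  intro H. assert (fst z * fst z + snd z * snd z <> 0).
  { intro E. apply H. destruct z as [a b]; simpl in *; unfold C0; apply C_eq; simpl; nra. }
  unfold Cmul, Cinv, C1; apply C_eq; simpl; field; auto.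
Qed.

Lemma Cnorm_inv z : z <> C0 -> Cnorm (Cinv z) = / Cnorm z.
Proof.
  intro H. assert (Cnorm z <> 0) by (intro E; apply H, Cnorm_eq0, E).
  pose proof (Cmul_inv z H). apply (f_equal Cnorm) in H1. rewrite Cnorm_mul, Cnorm_C1 in H1.
  field_simplify_eq; auto. lra.
Qed.

Lemma Cnorm_pos_neq z : 0 < Cnorm z -> z <> C0.
Proof. intros H E; subst; rewrite Cnorm_C0 in H; lra. Qed.

Lemma Cinv_lip a b c : 0 < c -> c <= Cnorm a -> c <= Cnorm b ->
  Cnorm (Csub (Cinv a) (Cinv b)) <= / (c * c) * Cnorm (Csub a b).
Proof.
  intros Hc Ha Hb.
  assert (na : a <> C0) by (apply Cnorm_pos_neq; lra).
  assert (nb : b <> C0) by (apply Cnorm_pos_neq; lra).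
  assert (E : Csub (Cinv a) (Cinv b) = Cmul (Cmul (Cinv a) (Cinv b)) (Csub b a)).
  { pose proof (Cmul_inv a na); pose proof (Cmul_inv b nb).
    destruct a as [a1 a2], b as [b1 b2]; unfold Cmul, Csub, Cinv, C1 in *; simpl in *.
    injection H; injection H0; intros. apply C_eq; simpl.
    all: assert (a1*a1+a2*a2 <> 0) by (intro E; apply na; unfold C0; apply C_eq; simpl; nra).
    all: assert (b1*b1+b2*b2 <> 0) by (intro E; apply nb; unfold C0; apply C_eq; simpl; nra).
    all: field; auto. }
  rewrite E, !Cnorm_mul, Cnorm_inv, Cnorm_inv, Cnorm_opp_sub by auto.
  pose proof (Cnorm_ge0 (Csub a b)).
  assert (/ Cnorm a <= / c) by (apply Rinv_le_contravar; lra).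
  assert (/ Cnorm b <= / c) by (apply Rinv_le_contravar; lra).
  assert (0 <= / Cnorm a) by (apply Rlt_le, Rinv_0_lt_compat; lra).
  assert (0 <= / Cnorm b) by (apply Rlt_le, Rinv_0_lt_compat; lra).
  rewrite Rinv_mult. apply Rmult_le_compat_r; auto. apply Rmult_le_compat; auto.
Qed.

Lemma Rabs_le_between x M : Rabs x <= M -> - M <= x <= M.
Proof. intros. pose proof (Rle_abs x). pose proof (Rle_abs (-x)). rewrite Rabs_Ropp in H1. lra. Qed.

Module UFM.
Import ssreflect ssrbool boolp classical_sets filter.
Lemma uf_exists (T : Type) (B : (T -> Prop) -> Prop)
  (HB : forall l : list (T -> Prop), List.Forall B l -> exists t, List.Forall (fun A => A t) l) :
  exists U : (T -> Prop) -> Prop,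
    (forall A, B A -> U A) /\
    (forall A A', U A -> (forall t, A t -> A' t) -> U A') /\
    (forall A A', U A -> U A' -> U (fun t => A t /\ A' t)) /\
    (forall A, U A -> exists t, A t) /\
    (forall A, U A \/ U (fun t => ~ A t)).
Proof.
pose F := fun A : T -> Prop => exists l, List.Forall B l /\ forall t, List.Forall (fun A => A t) l -> A t.
have FF : ProperFilter (F : set_system T).
  apply: Build_ProperFilter_ex.
    move=> P [l [Bl Hl]]. have [t Ht] := HB l Bl. by exists t; apply: Hl.
  split.
  - by exists nil; split.
  - move=> P Q [l1 [B1 H1]] [l2 [B2 H2]]; exists (l1 ++ l2); split.
      by apply/List.Forall_app; split.
    move=> t /List.Forall_app [] /H1 ? /H2 ?; by split.
  - move=> P Q PQ [l [Bl Hl]]; exists l; split => // t /Hl; exact: PQ.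
have [G [GU FG]] := ultraFilterLemma FF.
exists G; split; [|split; [|split; [|split]]].
- move=> A BA; apply: FG; exists (A :: nil); split; first by constructor.
  by move=> t Ht; inversion Ht.
- move=> A A' GA AA'; apply: (@filterS _ G _ A) => //.
- move=> A A' GA GA'; exact: (@filterI _ G _ A A').
- move=> A GA; exact: (@filter_ex _ G _ A).
- move=> A; have := in_ultra_setVsetC A GU; by [].
Qed.
End UFM.

Lemma Cmul_C1_l z : Cmul C1 z = z.
Proof. unfold Cmul, C1; apply C_eq; simpl; ring. Qed.
Lemma Cmul_comm a b : Cmul a b = Cmul b a.
Proof. unfold Cmul; apply C_eq; simpl; ring. Qed.
Lemma Cmul_assoc a b c : Cmul (Cmul a b) c = Cmul a (Cmul b c).
Proof. unfold Cmul; apply C_eq; simpl; ring. Qed.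
Lemma Cmul_C0_l z : Cmul C0 z = C0.
Proof. unfold Cmul, C0; apply C_eq; simpl; ring. Qed.
Lemma C1_neq_C0 : C1 <> C0.
Proof. unfold C1, C0; intro H; injection H; lra. Qed.
Lemma Cmul_inv_uniq a b : Cmul a b = C1 -> b = Cinv a.
Proof.
  intro H. assert (a <> C0) by (intro E; subst; rewrite Cmul_C0_l in H; apply C1_neq_C0; auto).
  rewrite <- (Cmul_C1_l b), <- (Cmul_inv a H0), (Cmul_comm a), Cmul_assoc, H.
  rewrite Cmul_comm, Cmul_C1_l; auto.
Qed.
Lemma Cmul_cancel a z : z <> C0 -> Cmul a z = z -> a = C1.
Proof.
  intros Hz H.
  transitivity (Cmul (Cmul a z) (Cinv z)).
  - rewrite Cmul_assoc, Cmul_inv by auto. rewrite Cmul_comm, Cmul_C1_l; auto.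
  - rewrite H; apply Cmul_inv; auto.
Qed.

Section Chars.
Variables (S : Type) (A : (S -> C) -> Prop) (m : (S -> C) -> C).
Hypothesis Hm : is_character S A m.
Hypothesis Aconst : forall c, A (fun _ => c).
Hypothesis Ascal : forall c f, A f -> A (fun x => Cmul c (f x)).

Lemma ch_add f g : A f -> A g -> m (fun x => Cadd (f x) (g x)) = Cadd (m f) (m g).
Proof using Hm Aconst Ascal. apply Hm. Qed.
Lemma ch_scal c f : A f -> m (fun x => Cmul c (f x)) = Cmul c (m f).
Proof using Hm Aconst Ascal. apply Hm. Qed.
Lemma ch_mul f g : A f -> A g -> m (fun x => Cmul (f x) (g x)) = Cmul (m f) (m g).
Proof using Hm Aconst Ascal. apply Hm. Qed.

Lemma ch_one : m (fun _ => C1) = C1.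
Proof using Hm Aconst Ascal.
  destruct Hm as [_ [_ [Hmul [f0 [Af0 Hf0]]]]].
  apply (Cmul_cancel _ (m f0)); auto.
  rewrite <- Hmul; auto. f_equal. apply functional_extensionality; intros; apply Cmul_C1_l.
Qed.

Lemma ch_const c : m (fun _ => c) = c.
Proof using Hm Aconst Ascal.
  replace (fun _ : S => c) with (fun x : S => Cmul c ((fun _ => C1) x)).
  rewrite ch_scal, ch_one; auto. rewrite Cmul_comm; apply Cmul_C1_l.
  apply functional_extensionality; intros; rewrite Cmul_comm; apply Cmul_C1_l.
Qed.

Lemma ch_sub f g : A f -> A g -> m (fun x => Csub (f x) (g x)) = Csub (m f) (m g).
Proof using Hm Aconst Ascal.
  intros Af Ag.
  replace (fun x => Csub (f x) (g x)) with (fun x => Cadd (f x) ((fun y => Cmul (-1, 0) (g y)) x)).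
  rewrite ch_add, ch_scal; auto. unfold Cadd, Csub, Cmul; apply C_eq; simpl; ring.
  apply functional_extensionality; intros; unfold Cadd, Csub, Cmul; apply C_eq; simpl; ring.
Qed.
End Chars.

Definition isUF {T : Type} (U : (T -> Prop) -> Prop) : Prop :=
  (forall A A', U A -> (forall t, A t -> A' t) -> U A') /\
  (forall A A', U A -> U A' -> U (fun t => A t /\ A' t)) /\
  (forall A, U A -> exists t, A t) /\
  (forall A, U A \/ U (fun t => ~ A t)).

Section UL.
Variables (T : Type) (U : (T -> Prop) -> Prop).
Hypothesis HU : isUF U.

Lemma UF_mono A A' : U A -> (forall t, A t -> A' t) -> U A'.
Proof. apply HU. Qed.
Lemma UF_and A A' : U A -> U A' -> U (fun t => A t /\ A' t).
Proof. apply HU. Qed.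
Lemma UF_ex A : U A -> exists t, A t.
Proof. apply HU. Qed.
Lemma UF_ultra A : U A \/ U (fun t => ~ A t).
Proof. apply HU. Qed.
Lemma UF_full : U (fun _ => True).
Proof.
  destruct (UF_ultra (fun _ => True)); auto. apply UF_ex in H. destruct H; tauto.
Qed.

Lemma ulimR (g : T -> R) M : (forall t, Rabs (g t) <= M) ->
  exists L, forall e, 0 < e -> U (fun t => Rabs (g t - L) < e).
Proof.
  intros HM.
  set (E := fun c => U (fun t => c <= g t)).
  assert (Hb : bound E).
  { exists M. intros c Ec. destruct (UF_ex _ Ec) as [t Ht]. specialize (HM t).
    apply Rabs_le_between in HM. lra. }
  assert (Hne : exists c, E c).
  { exists (- M). apply (UF_mono _ _ UF_full). intros t _. specialize (HM t).
    apply Rabs_le_between in HM. lra. }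
  destruct (completeness E Hb Hne) as [L [HL1 HL2]].
  exists L. intros e He.
  assert (U1 : U (fun t => L - e < g t)).
  { destruct (classic (exists c, E c /\ L - e < c)) as [[c [Ec Hc]]|Hn].
    - apply (UF_mono _ _ Ec). intros; lra.
    - exfalso. assert (L <= L - e); [|lra]. apply HL2. intros c Ec.
      destruct (Rle_dec c (L - e)); auto. exfalso; apply Hn; exists c; split; auto; lra. }
  assert (U2 : U (fun t => g t < L + e)).
  { destruct (UF_ultra (fun t => g t < L + e)) as [|Hc]; auto. exfalso.
    assert (E (L + e)). { apply (UF_mono _ _ Hc). intros t Ht; lra. }
    specialize (HL1 _ H). lra. }
  apply (UF_mono _ _ (UF_and _ _ U1 U2)). intros t [H1 H2]. apply Rabs_def1; lra.
Qed.

Definition ULim (h : T -> C) (L : C) : Prop :=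
  forall e, 0 < e -> U (fun t => Cnorm (Csub (h t) L) < e).

Lemma ulimC (h : T -> C) M : (forall t, Cnorm (h t) <= M) -> exists L, ULim h L.
Proof.
  intros HM.
  destruct (ulimR (fun t => fst (h t)) M) as [L1 H1].
  { intros t; eapply Rle_trans; [apply Cnorm_fst|auto]. }
  destruct (ulimR (fun t => snd (h t)) M) as [L2 H2].
  { intros t; eapply Rle_trans; [apply Cnorm_snd|auto]. }
  exists (L1, L2). intros e He.
  apply (UF_mono _ _ (UF_and _ _ (H1 (e/2) ltac:(lra)) (H2 (e/2) ltac:(lra)))).
  intros t [A1 A2]. eapply Rle_lt_trans; [apply Cnorm_le_abs|]. unfold Csub; simpl. lra.
Qed.

Lemma ulim_bound h L c r : ULim h L -> U (fun t => Cnorm (Csub (h t) c) <= r) -> Cnorm (Csub L c) <= r.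
Proof.
  intros HL Hr. destruct (Rle_dec (Cnorm (Csub L c)) r) as [|Hn]; auto. exfalso.
  apply Rnot_le_lt in Hn.
  destruct (UF_ex _ (UF_and _ _ (HL (Cnorm (Csub L c) - r) ltac:(lra)) Hr)) as [t [A1 A2]].
  pose proof (Cnorm_tri L (h t) c). rewrite (Cnorm_opp_sub L (h t)) in H. lra.
Qed.

Lemma ulim_unique h L1 L2 : ULim h L1 -> ULim h L2 -> L1 = L2.
Proof.
  intros H1 H2. apply Cnorm_small_eq. intros e He.
  destruct (UF_ex _ (UF_and _ _ (H1 (e/2) ltac:(lra)) (H2 (e/2) ltac:(lra)))) as [t [A1 A2]].
  pose proof (Cnorm_tri L1 (h t) L2). rewrite (Cnorm_opp_sub L1 (h t)) in H. lra.
Qed.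

Lemma ulim_add h1 h2 L1 L2 : ULim h1 L1 -> ULim h2 L2 -> ULim (fun t => Cadd (h1 t) (h2 t)) (Cadd L1 L2).
Proof.
  intros H1 H2 e He.
  apply (UF_mono _ _ (UF_and _ _ (H1 (e/2) ltac:(lra)) (H2 (e/2) ltac:(lra)))).
  intros t [A1 A2].
  replace (Csub (Cadd (h1 t) (h2 t)) (Cadd L1 L2)) with (Cadd (Csub (h1 t) L1) (Csub (h2 t) L2))
    by (unfold Cadd, Csub; apply C_eq; simpl; ring).
  eapply Rle_lt_trans; [apply Cnorm_add|]. lra.
Qed.

Lemma ulim_mul h1 h2 L1 L2 M : (forall t, Cnorm (h2 t) <= M) ->
  ULim h1 L1 -> ULim h2 L2 -> ULim (fun t => Cmul (h1 t) (h2 t)) (Cmul L1 L2).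
Proof.
  intros HM H1 H2 e He.
  set (K := M + Cnorm L1 + 1).
  assert (HK : 1 <= K).
  { unfold K. assert (0 <= M). { destruct (UF_ex _ UF_full) as [t _]. specialize (HM t). pose proof (Cnorm_ge0 (h2 t)). lra. }
    pose proof (Cnorm_ge0 L1). lra. }
  set (d := e / (2 * K)).
  assert (Hd : 0 < d) by (unfold d; apply Rdiv_lt_0_compat; lra).
  apply (UF_mono _ _ (UF_and _ _ (H1 d Hd) (H2 d Hd))).
  intros t [A1 A2].
  replace (Csub (Cmul (h1 t) (h2 t)) (Cmul L1 L2)) with
    (Cadd (Cmul (Csub (h1 t) L1) (h2 t)) (Cmul L1 (Csub (h2 t) L2)))
    by (unfold Cadd, Csub, Cmul; apply C_eq; simpl; ring).
  eapply Rle_lt_trans; [apply Cnorm_add|]. rewrite !Cnorm_mul.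
  specialize (HM t).
  pose proof (Cnorm_ge0 L1); pose proof (Cnorm_ge0 (h2 t));
  pose proof (Cnorm_ge0 (Csub (h1 t) L1)); pose proof (Cnorm_ge0 (Csub (h2 t) L2)).
  assert (Cnorm (Csub (h1 t) L1) * Cnorm (h2 t) <= d * K) by (unfold K; apply Rmult_le_compat; lra).
  assert (Cnorm L1 * Cnorm (Csub (h2 t) L2) <= K * d) by (unfold K; apply Rmult_le_compat; lra).
  assert (d * K = e / 2) by (unfold d; field; lra).
  assert (Cnorm L1 * Cnorm (Csub (h2 t) L2) < e / 2 \/ Cnorm (Csub (h1 t) L1) * Cnorm (h2 t) < e/2).
  { destruct (Req_dec (Cnorm L1) 0) as [E|E].
    - left; rewrite E; lra.
    - left. assert (Cnorm L1 * Cnorm (Csub (h2 t) L2) < Cnorm L1 * d) by (apply Rmult_lt_compat_l; lra).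
      assert (Cnorm L1 * d <= K * d) by (apply Rmult_le_compat_r; unfold K; lra). lra. }
  destruct H8; lra.
Qed.

Lemma ulim_const c : ULim (fun _ => c) c.
Proof.
  intros e He. apply (UF_mono _ _ UF_full). intros.
  replace (Csub c c) with C0 by (unfold Csub, C0; apply C_eq; simpl; ring). rewrite Cnorm_C0; auto.
Qed.

End UL.
Section Main.
Variables (S : Type) (op : S -> S -> S) (open : (S -> Prop) -> Prop).
Hypothesis Htop : is_topology S open.
Hypothesis Hassoc : forall a b c, op (op a b) c = op a (op b c).
Hypothesis Hlc : forall s, continuous_SS S open (fun x => op s x).

Notation cont := (continuous_C S open).
Notation CBf := (CB S open).

Lemma open_full : open (fun _ => True).
Proof. apply Htop. Qed.
Lemma open_and U V : open U -> open V -> open (fun x => U x /\ V x).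
Proof. apply Htop. Qed.

Lemma cont_const c : cont (fun _ => c).
Proof.
  intros s e He. exists (fun _ => True). split; [apply open_full|split; auto].
  intros. replace (Csub c c) with C0 by (unfold Csub, C0; apply C_eq; simpl; ring).
  rewrite Cnorm_C0; auto.
Qed.

Lemma cont_lip f g K : cont f -> 0 < K ->
  (forall x y, Cnorm (Csub (g x) (g y)) <= K * Cnorm (Csub (f x) (f y))) -> cont g.
Proof.
  intros Hf HK Hl s e He. destruct (Hf s (e / K)) as [U [HU [Us HUx]]].
  apply Rdiv_lt_0_compat; auto.
  exists U; split; auto; split; auto. intros x Ux.
  eapply Rle_lt_trans; [apply Hl|]. specialize (HUx x Ux).
  apply Rmult_lt_compat_l with (r := K) in HUx; auto.
  replace (K * (e / K)) with e in HUx by (field; lra). auto.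
Qed.

Lemma cont_add f g : cont f -> cont g -> cont (fun x => Cadd (f x) (g x)).
Proof.
  intros Hf Hg s e He.
  destruct (Hf s (e/2)) as [U [HU [Us HUx]]]; [lra|].
  destruct (Hg s (e/2)) as [V [HV [Vs HVx]]]; [lra|].
  exists (fun x => U x /\ V x); split; [apply open_and; auto|split; auto].
  intros x [Ux Vx].
  replace (Csub (Cadd (f x) (g x)) (Cadd (f s) (g s))) with (Cadd (Csub (f x) (f s)) (Csub (g x) (g s)))
    by (unfold Cadd, Csub; apply C_eq; simpl; ring).
  eapply Rle_lt_trans; [apply Cnorm_add|]. specialize (HUx x Ux); specialize (HVx x Vx); lra.
Qed.

Lemma cont_mul f g : cont f -> cont g -> cont (fun x => Cmul (f x) (g x)).
Proof.
  intros Hf Hg s e He.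
  set (M := Cnorm (f s) + Cnorm (g s) + 1).
  assert (HM : 1 <= M) by (unfold M; pose proof (Cnorm_ge0 (f s)); pose proof (Cnorm_ge0 (g s)); lra).
  set (d := Rmin 1 (e / (2 * M))).
  assert (Hd : 0 < d) by (unfold d; apply Rmin_glb_lt; [lra| apply Rdiv_lt_0_compat; lra]).
  assert (Hd1 : d <= 1) by apply Rmin_l.
  assert (Hd2 : d <= e / (2*M)) by apply Rmin_r.
  destruct (Hf s d) as [U [HU [Us HUx]]]; auto.
  destruct (Hg s d) as [V [HV [Vs HVx]]]; auto.
  exists (fun x => U x /\ V x); split; [apply open_and; auto|split; auto].
  intros x [Ux Vx]. specialize (HUx x Ux); specialize (HVx x Vx).
  replace (Csub (Cmul (f x) (g x)) (Cmul (f s) (g s))) with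
    (Cadd (Cmul (Csub (f x) (f s)) (g x)) (Cmul (f s) (Csub (g x) (g s))))
    by (unfold Cadd, Csub, Cmul; apply C_eq; simpl; ring).
  eapply Rle_lt_trans; [apply Cnorm_add|]. rewrite !Cnorm_mul.
  assert (Cnorm (g x) <= Cnorm (g s) + 1).
  { replace (g x) with (Cadd (Csub (g x) (g s)) (g s)) by (unfold Cadd, Csub; apply C_eq; simpl; ring).
    eapply Rle_trans; [apply Cnorm_add|]. lra. }
  pose proof (Cnorm_ge0 (f s)); pose proof (Cnorm_ge0 (g s)); pose proof (Cnorm_ge0 (g x));
  pose proof (Cnorm_ge0 (Csub (f x) (f s))); pose proof (Cnorm_ge0 (Csub (g x) (g s))).
  assert (Cnorm (Csub (f x) (f s)) * Cnorm (g x) <= d * M) by (unfold M; nra).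
  assert (Cnorm (f s) * Cnorm (Csub (g x) (g s)) <= M * d) by (unfold M; nra).
  assert (d * M <= e / 2).
  { apply Rmult_le_compat_r with (r := M) in Hd2; [|lra].
    replace (e / (2 * M) * M) with (e/2) in Hd2 by (field; lra). auto. }
  assert (Cnorm (Csub (f x) (f s)) * Cnorm (g x) < e/2).
  { destruct (Req_dec (Cnorm (g x)) 0) as [E|E]; [rewrite E; lra|].
    assert (Cnorm (Csub (f x) (f s)) * Cnorm (g x) < d * Cnorm (g x)) by (apply Rmult_lt_compat_r; lra).
    assert (d * Cnorm (g x) <= d * M) by (apply Rmult_le_compat_l; unfold M in *; lra).
    lra. }
  lra.
Qed.

Lemma cont_comp f phi : cont f -> continuous_SS S open phi -> cont (fun x => f (phi x)).
Proof.
  intros Hf Hp s e He. destruct (Hf (phi s) e He) as [U [HU [Us HUx]]].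
  exists (fun x => U (phi x)); split; [apply Hp; auto|split; auto].
Qed.

Lemma bnd_const c : bounded_C S (fun _ => c).
Proof. exists (Cnorm c); intros; lra. Qed.

Lemma bnd_add f g : bounded_C S f -> bounded_C S g -> bounded_C S (fun x => Cadd (f x) (g x)).
Proof.
  intros [M HM] [N HN]; exists (M + N); intros x.
  eapply Rle_trans; [apply Cnorm_add|]. specialize (HM x); specialize (HN x); lra.
Qed.

Lemma bnd_mul f g : bounded_C S f -> bounded_C S g -> bounded_C S (fun x => Cmul (f x) (g x)).
Proof.
  intros [M HM] [N HN]; exists (M * N); intros x. rewrite Cnorm_mul.
  specialize (HM x); specialize (HN x). pose proof (Cnorm_ge0 (f x)); pose proof (Cnorm_ge0 (g x)).
  apply Rmult_le_compat; auto.
Qed.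

Lemma CB_const c : CBf (fun _ => c).
Proof. split; [apply cont_const|apply bnd_const]. Qed.
Lemma CB_add f g : CBf f -> CBf g -> CBf (fun x => Cadd (f x) (g x)).
Proof. intros [] []; split; [apply cont_add|apply bnd_add]; auto. Qed.
Lemma CB_mul f g : CBf f -> CBf g -> CBf (fun x => Cmul (f x) (g x)).
Proof. intros [] []; split; [apply cont_mul|apply bnd_mul]; auto. Qed.
Lemma CB_scal c f : CBf f -> CBf (fun x => Cmul c (f x)).
Proof. intros H; apply (CB_mul (fun _ => c) f); auto; apply CB_const. Qed.
Lemma CB_conj f : CBf f -> CBf (fun x => Cconj (f x)).
Proof.
  intros [Hc [M HM]]; split.
  - apply (cont_lip f _ 1); auto; [lra|]. intros x y.
    replace (Csub (Cconj (f x)) (Cconj (f y))) with (Cconj (Csub (f x) (f y)))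
      by (unfold Cconj, Csub; apply C_eq; simpl; ring).
    rewrite Cnorm_conj; lra.
  - exists M; intros x; rewrite Cnorm_conj; auto.
Qed.
Lemma CB_comp f phi : CBf f -> continuous_SS S open phi -> CBf (fun x => f (phi x)).
Proof.
  intros [Hc [M HM]] Hp; split; [apply cont_comp; auto| exists M; auto].
Qed.
Lemma CB_inv f c : CBf f -> 0 < c -> (forall x, c <= Cnorm (f x)) -> CBf (fun x => Cinv (f x)).
Proof.
  intros [Hc _] Hc0 Hb; split.
  - apply (cont_lip f _ (/ (c*c))); auto. apply Rinv_0_lt_compat; nra.
    intros; apply Cinv_lip; auto.
  - exists (/ c). intros x. rewrite Cnorm_inv. apply Rinv_le_contravar; auto.
    apply Cnorm_pos_neq. specialize (Hb x); lra.
Qed.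
Lemma CB_ext f g : CBf f -> (forall x, f x = g x) -> CBf g.
Proof. intros H E. replace g with f; auto. apply functional_extensionality; auto. Qed.
Lemma CB_Ls s f : CBf f -> CBf (Ls S op s f).
Proof. intros H. apply (CB_comp f (fun x => op s x)); auto. Qed.


Lemma Cnorm_rev_tri a b : Cnorm a - Cnorm b <= Cnorm (Csub a b).
Proof.
  assert (Cnorm a <= Cnorm (Csub a b) + Cnorm b).
  { replace a with (Cadd (Csub a b) b) at 1 by (unfold Cadd, Csub; apply C_eq; simpl; ring).
    apply Cnorm_add. }
  lra.
Qed.

Lemma CB_sub f g : CBf f -> CBf g -> CBf (fun x => Csub (f x) (g x)).
Proof.
  intros Hf Hg. apply (CB_ext (fun x => Cadd (f x) (Cmul (-1,0) (g x)))).
  apply CB_add; auto; apply CB_scal; auto.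
  intros; unfold Cadd, Csub, Cmul; apply C_eq; simpl; ring.
Qed.

Notation chCB := (is_character S CBf).

Lemma chCB_bound m f M : chCB m -> CBf f -> (forall x, Cnorm (f x) <= M) -> Cnorm (m f) <= M.
Proof.
  intros Hm Hf HM. destruct (Rle_dec (Cnorm (m f)) M) as [|Hgt]; auto. exfalso.
  apply Rnot_le_lt in Hgt. set (l := m f) in *.
  set (k := fun x => Csub (f x) ((fun _ => l) x)).
  assert (Hk : CBf k) by (apply CB_sub; auto; apply CB_const).
  assert (mk : m k = C0).
  { unfold k. rewrite (ch_sub S CBf m Hm CB_const CB_scal); auto; [|apply CB_const].
    rewrite (ch_const S CBf m Hm CB_const CB_scal). unfold l, Csub, C0; apply C_eq; simpl; ring. }
  assert (kb : forall x, Cnorm (m f) - M <= Cnorm (k x)).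
  { intros x. unfold k. cbv beta. rewrite Cnorm_opp_sub. pose proof (Cnorm_rev_tri l (f x)). specialize (HM x).
    fold l. clearbody k l. lra. }
  fold l in kb. clearbody k l.
  assert (Hki : CBf (fun x => Cinv (k x))) by (apply (CB_inv k (Cnorm l - M)); auto; lra).
  assert (E : (fun x => Cmul (k x) (Cinv (k x))) = (fun _ => C1)).
  { apply functional_extensionality; intros x. apply Cmul_inv, Cnorm_pos_neq.
    specialize (kb x); lra. }
  pose proof (ch_mul S CBf m Hm CB_const CB_scal k _ Hk Hki). cbv beta in H. rewrite E, (ch_one S CBf m Hm CB_const CB_scal), mk, Cmul_C0_l in H.
  apply C1_neq_C0; auto.
Qed.

Lemma chCB_inv m f c : chCB m -> CBf f -> 0 < c -> (forall x, c <= Cnorm (f x)) ->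
  m (fun x => Cinv (f x)) = Cinv (m f) /\ c <= Cnorm (m f).
Proof.
  intros Hm Hf Hc Hb.
  assert (Hfi : CBf (fun x => Cinv (f x))) by (apply (CB_inv f c); auto).
  assert (E : (fun x => Cmul (f x) (Cinv (f x))) = (fun _ => C1)).
  { apply functional_extensionality; intros x. apply Cmul_inv, Cnorm_pos_neq.
    specialize (Hb x); lra. }
  pose proof (ch_mul S CBf m Hm CB_const CB_scal f _ Hf Hfi). cbv beta in H. rewrite E, (ch_one S CBf m Hm CB_const CB_scal) in H.
  split. apply Cmul_inv_uniq; auto.
  assert (Cnorm (m (fun x => Cinv (f x))) <= / c).
  { apply chCB_bound; auto. intros x. rewrite Cnorm_inv.
    apply Rinv_le_contravar; auto. apply Cnorm_pos_neq; specialize (Hb x); lra. }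
  apply (f_equal Cnorm) in H. rewrite Cnorm_C1, Cnorm_mul in H.
  pose proof (Cnorm_ge0 (m f)). pose proof (Cnorm_ge0 (m (fun x => Cinv (f x)))).
  assert (1 <= Cnorm (m f) * / c) by (rewrite H; apply Rmult_le_compat_l; auto).
  apply Rmult_le_compat_r with (r := c) in H3; [|lra].
  replace (Cnorm (m f) * / c * c) with (Cnorm (m f)) in H3 by (field; lra). lra.
Qed.

Notation Lmcf := (Lmc S op open).

Lemma Lmc_CB f : Lmcf f -> CBf f.
Proof. intros []; auto. Qed.
Lemma Lmc_T m f : Lmcf f -> chCB m -> CBf (Tmu S op m f).
Proof. intros [_ H] Hm; apply H; auto. Qed.
Lemma Lmc_ext f g : Lmcf f -> (forall x, f x = g x) -> Lmcf g.
Proof. intros H E. replace g with f; auto. apply functional_extensionality; auto. Qed.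

Lemma Lmc_const c : Lmcf (fun _ => c).
Proof.
  split; [apply CB_const|]. intros m Hm. apply (CB_ext (fun _ => c)); [apply CB_const|].
  intros s. unfold Tmu, Ls. rewrite (ch_const S CBf m Hm CB_const CB_scal); auto.
Qed.

Lemma Lmc_add f g : Lmcf f -> Lmcf g -> Lmcf (fun x => Cadd (f x) (g x)).
Proof.
  intros Hf Hg. split; [apply CB_add; apply Lmc_CB; auto|]. intros m Hm.
  apply (CB_ext (fun s => Cadd (Tmu S op m f s) (Tmu S op m g s))).
  apply CB_add; apply Lmc_T; auto.
  intros s. unfold Tmu. symmetry. apply (ch_add S CBf m Hm CB_const CB_scal); apply CB_Ls, Lmc_CB; auto.
Qed.

Lemma Lmc_mult f g : Lmcf f -> Lmcf g -> Lmcf (fun x => Cmul (f x) (g x)).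
Proof.
  intros Hf Hg. split; [apply CB_mul; apply Lmc_CB; auto|]. intros m Hm.
  apply (CB_ext (fun s => Cmul (Tmu S op m f s) (Tmu S op m g s))).
  apply CB_mul; apply Lmc_T; auto.
  intros s. unfold Tmu. symmetry. apply (ch_mul S CBf m Hm CB_const CB_scal); apply CB_Ls, Lmc_CB; auto.
Qed.

Lemma Lmc_scal c f : Lmcf f -> Lmcf (fun x => Cmul c (f x)).
Proof. intros Hf. apply (Lmc_mult (fun _ => c) f); auto. apply Lmc_const. Qed.

Lemma Lmc_sub f g : Lmcf f -> Lmcf g -> Lmcf (fun x => Csub (f x) (g x)).
Proof.
  intros Hf Hg. apply (Lmc_ext (fun x => Cadd (f x) (Cmul (-1,0) (g x)))).
  apply Lmc_add; auto; apply Lmc_scal; auto.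
  intros; unfold Cadd, Csub, Cmul; apply C_eq; simpl; ring.
Qed.

Lemma Cconj_conj z : Cconj (Cconj z) = z.
Proof. unfold Cconj; apply C_eq; simpl; ring. Qed.

Lemma chCB_conj m : chCB m -> chCB (fun g => Cconj (m (fun x => Cconj (g x)))).
Proof.
  intros Hm. split; [|split; [|split]].
  - intros f g Hf Hg.
    replace (fun x => Cconj (Cadd (f x) (g x))) with (fun x => Cadd ((fun y => Cconj (f y)) x) ((fun y => Cconj (g y)) x))
      by (apply functional_extensionality; intros; unfold Cconj, Cadd; apply C_eq; simpl; ring).
    rewrite (ch_add S CBf m Hm CB_const CB_scal) by (apply CB_conj; auto). unfold Cconj, Cadd; apply C_eq; simpl; ring.
  - intros c f Hf.
    replace (fun x => Cconj (Cmul c (f x))) with (fun x => Cmul (Cconj c) ((fun y => Cconj (f y)) x))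
      by (apply functional_extensionality; intros; unfold Cconj, Cmul; apply C_eq; simpl; ring).
    rewrite (ch_scal S CBf m Hm CB_const CB_scal) by (apply CB_conj; auto). unfold Cconj, Cmul; apply C_eq; simpl; ring.
  - intros f g Hf Hg.
    replace (fun x => Cconj (Cmul (f x) (g x))) with (fun x => Cmul ((fun y => Cconj (f y)) x) ((fun y => Cconj (g y)) x))
      by (apply functional_extensionality; intros; unfold Cconj, Cmul; apply C_eq; simpl; ring).
    rewrite (ch_mul S CBf m Hm CB_const CB_scal) by (apply CB_conj; auto). unfold Cconj, Cmul; apply C_eq; simpl; ring.
  - exists (fun _ => C1). split; [apply CB_const|].
    rewrite (ch_const S CBf m Hm CB_const CB_scal). rewrite Cconj_conj. apply C1_neq_C0.
Qed.

Lemma Lmc_conj f : Lmcf f -> Lmcf (fun x => Cconj (f x)).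
Proof.
  intros Hf. split; [apply CB_conj, Lmc_CB; auto|]. intros m Hm.
  apply (CB_ext (fun s => Cconj (Tmu S op (fun g => Cconj (m (fun x => Cconj (g x)))) f s))).
  apply CB_conj, Lmc_T; auto. apply chCB_conj; auto.
  intros s. unfold Tmu, Ls. rewrite Cconj_conj. f_equal.
Qed.

Lemma Lmc_Ls s f : Lmcf f -> Lmcf (Ls S op s f).
Proof.
  intros Hf. split; [apply CB_Ls, Lmc_CB; auto|]. intros m Hm.
  apply (CB_ext (fun t => Tmu S op m f (op s t))).
  apply (CB_comp (Tmu S op m f) (fun t => op s t)); auto. apply Lmc_T; auto.
  intros t. unfold Tmu, Ls. f_equal. apply functional_extensionality; intros. rewrite Hassoc; auto.
Qed.

Lemma Lmc_inv f c : Lmcf f -> 0 < c -> (forall x, c <= Cnorm (f x)) -> Lmcf (fun x => Cinv (f x)).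
Proof.
  intros Hf Hc Hb. split; [apply (CB_inv f c); auto; apply Lmc_CB; auto|]. intros m Hm.
  assert (H : forall s, m (Ls S op s (fun x => Cinv (f x))) = Cinv (m (Ls S op s f)) /\ c <= Cnorm (m (Ls S op s f))).
  { intros s. apply (chCB_inv m (Ls S op s f) c); auto. apply CB_Ls, Lmc_CB; auto. intros; apply Hb. }
  apply (CB_ext (fun s => Cinv (Tmu S op m f s))).
  apply (CB_inv _ c); auto. apply Lmc_T; auto. intros s; apply H.
  intros s. unfold Tmu. symmetry; apply H.
Qed.

Notation SL := (SLmc S op open).

Lemma SL_add nu f g : SL nu -> Lmcf f -> Lmcf g -> nu (fun x => Cadd (f x) (g x)) = Cadd (nu f) (nu g).
Proof. intros H; apply (ch_add S Lmcf nu H Lmc_const Lmc_scal). Qed.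
Lemma SL_mul nu f g : SL nu -> Lmcf f -> Lmcf g -> nu (fun x => Cmul (f x) (g x)) = Cmul (nu f) (nu g).
Proof. intros H; apply (ch_mul S Lmcf nu H Lmc_const Lmc_scal). Qed.
Lemma SL_scal nu c f : SL nu -> Lmcf f -> nu (fun x => Cmul c (f x)) = Cmul c (nu f).
Proof. intros H; apply (ch_scal S Lmcf nu H Lmc_const Lmc_scal). Qed.
Lemma SL_const nu c : SL nu -> nu (fun _ => c) = c.
Proof. intros H; apply (ch_const S Lmcf nu H Lmc_const Lmc_scal). Qed.
Lemma SL_sub nu f g : SL nu -> Lmcf f -> Lmcf g -> nu (fun x => Csub (f x) (g x)) = Csub (nu f) (nu g).
Proof. intros H; apply (ch_sub S Lmcf nu H Lmc_const Lmc_scal). Qed.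

Fixpoint hh (nu : (S -> C) -> C) (fs : list (S -> C)) : S -> C :=
  match fs with
  | nil => fun _ => C0
  | f :: fs' => fun x => Cadd (Cmul (Csub (f x) (nu f)) (Cconj (Csub (f x) (nu f)))) (hh nu fs' x)
  end.

Lemma hh_Lmc nu fs : Forall Lmcf fs -> Lmcf (hh nu fs).
Proof.
  induction 1 as [|f fs Hf Hfs IH]; simpl. apply Lmc_const.
  apply Lmc_add; auto.
  assert (Hg : Lmcf (fun x => Csub (f x) ((fun _ => nu f) x))) by (apply Lmc_sub; auto; apply Lmc_const).
  apply (Lmc_mult _ (fun y => Cconj (Csub (f y) (nu f)))); auto. apply Lmc_conj; auto.
Qed.

Lemma hh_nu nu fs : SL nu -> Forall Lmcf fs -> nu (hh nu fs) = C0.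
Proof.
  intros Hn. induction 1 as [|f fs Hf Hfs IH]; simpl. apply SL_const; auto.
  assert (Hg : Lmcf (fun x => Csub (f x) ((fun _ => nu f) x))) by (apply Lmc_sub; auto; apply Lmc_const).
  assert (Hh : Lmcf (hh nu fs)) by (apply hh_Lmc; auto).
  assert (Hgc : Lmcf (fun y => Cconj (Csub (f y) (nu f)))) by (apply Lmc_conj; auto).
  rewrite (SL_add nu _ (hh nu fs)); auto.
  2: apply (Lmc_mult _ (fun y => Cconj (Csub (f y) (nu f)))); auto.
  rewrite IH. rewrite (SL_mul nu (fun x0 => Csub (f x0) (nu f)) (fun y => Cconj (Csub (f y) (nu f)))); auto.
  change (fun x0 => Csub (f x0) (nu f)) with (fun x0 => Csub (f x0) ((fun _ => nu f) x0)).
  rewrite SL_sub, SL_const; auto; [|apply Lmc_const].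
  unfold Csub, Cmul, Cadd, C0; apply C_eq; simpl; ring.
Qed.

Lemma hh_snd nu fs x : snd (hh nu fs x) = 0.
Proof.
  induction fs; simpl; auto. rewrite IHfs. unfold Cadd, Cmul, Cconj, Csub; simpl; ring.
Qed.

Lemma Cmul_conj_fst z : fst (Cmul z (Cconj z)) = Cnorm z * Cnorm z.
Proof. rewrite Cnorm_sq. unfold Cmul, Cconj; simpl; ring. Qed.

Lemma fst_Cadd a b : fst (Cadd a b) = fst a + fst b.
Proof. reflexivity. Qed.
Lemma hh_cons nu f fs x : hh nu (f :: fs) x = Cadd (Cmul (Csub (f x) (nu f)) (Cconj (Csub (f x) (nu f)))) (hh nu fs x).
Proof. reflexivity. Qed.

Lemma hh_fst nu fs x f : In f fs -> Cnorm (Csub (f x) (nu f)) * Cnorm (Csub (f x) (nu f)) <= fst (hh nu fs x).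
Proof.
  assert (Hpos : forall fs, 0 <= fst (hh nu fs x)).
  { induction fs0. unfold hh, C0; simpl; lra. rewrite hh_cons, fst_Cadd, Cmul_conj_fst.
    pose proof (Cnorm_ge0 (Csub (a x) (nu a))). nra. }
  induction fs; [simpl; tauto|]. intros [<-|Hin].
  - rewrite hh_cons, fst_Cadd, Cmul_conj_fst. specialize (Hpos fs). lra.
  - specialize (IHfs Hin). rewrite hh_cons, fst_Cadd, Cmul_conj_fst.
    pose proof (Cnorm_ge0 (Csub (a x) (nu a))). nra.
Qed.

Lemma density nu fs e : SL nu -> Forall Lmcf fs -> 0 < e ->
  exists s, Forall (fun f => Cnorm (Csub (nu f) (f s)) < e) fs.
Proof.
  intros Hn Hfs He. apply NNPP; intro Hno.
  assert (Hbig : forall x, e * e <= Cnorm (hh nu fs x)).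
  { intros x. assert (~ Forall (fun f => Cnorm (Csub (nu f) (f x)) < e) fs) by (intro; apply Hno; eauto).
    rewrite Forall_forall in H. apply not_all_ex_not in H. destruct H as [f Hf].
    apply imply_to_and in Hf. destruct Hf as [Hin Hf]. apply Rnot_lt_le in Hf.
    pose proof (hh_fst nu fs x f Hin). rewrite Cnorm_opp_sub in Hf.
    assert (e * e <= fst (hh nu fs x)) by nra.
    apply Cnorm_ge_sq. nra. rewrite hh_snd.
    assert (e*e*(e*e) <= fst (hh nu fs x) * fst (hh nu fs x)) by (apply Rmult_le_compat; nra). nra. }
  assert (Hh : Lmcf (hh nu fs)) by (apply hh_Lmc; auto).
  assert (Hi : Lmcf (fun x => Cinv (hh nu fs x))) by (apply (Lmc_inv _ (e*e)); auto; nra).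
  assert (E : (fun x => Cmul (hh nu fs x) (Cinv (hh nu fs x))) = (fun _ => C1)).
  { apply functional_extensionality; intros x. apply Cmul_inv, Cnorm_pos_neq.
    specialize (Hbig x); nra. }
  pose proof (SL_mul nu _ _ Hn Hh Hi). cbv beta in H. rewrite E, SL_const, hh_nu, Cmul_C0_l in H; auto.
  apply C1_neq_C0; auto.
Qed.

Lemma CB_bnd f : CBf f -> bounded_C S f.
Proof. intros []; auto. Qed.

Definition uchar {T : Type} (U : (T -> Prop) -> Prop) (p : T -> S) : (S -> C) -> C :=
  fun g => epsilon (inhabits C0) (fun L => ULim T U (fun t => g (p t)) L).

Lemma uchar_spec {T} (U : (T -> Prop) -> Prop) p g : isUF U -> bounded_C S g ->
  ULim T U (fun t => g (p t)) (uchar U p g).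
Proof.
  intros HU [M HM]. unfold uchar. apply epsilon_spec.
  apply (ulimC T U HU _ M). intros; auto.
Qed.

Lemma uchar_bound {T} (U : (T -> Prop) -> Prop) p g c r : isUF U -> bounded_C S g ->
  U (fun t => Cnorm (Csub (g (p t)) c) <= r) -> Cnorm (Csub (uchar U p g) c) <= r.
Proof.
  intros HU Hb H. apply (ulim_bound T U HU (fun t => g (p t))); auto. apply (uchar_spec U p g); auto.
Qed.

Lemma uchar_ch {T} (U : (T -> Prop) -> Prop) p : isUF U -> chCB (uchar U p).
Proof.
  intros HU. split; [|split; [|split]].
  - intros f g Hf Hg. apply (ulim_unique T U HU (fun t => Cadd (f (p t)) (g (p t)))).
    apply (uchar_spec U p (fun x => Cadd (f x) (g x))); auto. apply CB_bnd, CB_add; auto.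
    apply (ulim_add T U HU); [apply (uchar_spec U p f)|apply (uchar_spec U p g)]; auto; apply CB_bnd; auto.
  - intros c f Hf. destruct (CB_bnd f Hf) as [M HM].
    apply (ulim_unique T U HU (fun t => Cmul c (f (p t)))).
    apply (uchar_spec U p (fun x => Cmul c (f x))); auto. apply CB_bnd, CB_scal; auto.
    apply (ulim_mul T U HU (fun _ => c) (fun t => f (p t)) _ _ M). intros; auto.
    apply (ulim_const T U HU). apply (uchar_spec U p f); auto. apply CB_bnd; auto.
  - intros f g Hf Hg. destruct (CB_bnd g Hg) as [M HM].
    apply (ulim_unique T U HU (fun t => Cmul (f (p t)) (g (p t)))).
    apply (uchar_spec U p (fun x => Cmul (f x) (g x))); auto. apply CB_bnd, CB_mul; auto.
    apply (ulim_mul T U HU _ (fun t => g (p t)) _ _ M). intros; auto.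
    apply (uchar_spec U p f); auto. apply CB_bnd; auto. apply (uchar_spec U p g); auto. apply CB_bnd; auto.
  - exists (fun _ => C1). split; [apply CB_const|].
    rewrite (ulim_unique T U HU (fun _ => C1) _ C1). apply C1_neq_C0.
    apply (uchar_spec U p (fun _ => C1)); auto. apply bnd_const. apply (ulim_const T U HU).
Qed.

Lemma chCB_SL m : chCB m -> SL m.
Proof.
  intros Hm. split; [|split; [|split]].
  - intros f g Hf Hg; apply Hm; apply Lmc_CB; auto.
  - intros c f Hf; apply Hm; apply Lmc_CB; auto.
  - intros f g Hf Hg; apply Hm; apply Lmc_CB; auto.
  - exists (fun _ => C1). split; [apply Lmc_const|].
    rewrite (ch_const S CBf m Hm CB_const CB_scal). apply C1_neq_C0.
Qed.

Lemma extend_char nu : SL nu -> exists m, chCB m /\ forall f, Lmcf f -> m f = nu f.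
Proof.
  intros Hn.
  set (B := fun A : S -> Prop => exists f e, Lmcf f /\ 0 < e /\ forall s, Cnorm (Csub (nu f) (f s)) < e -> A s).
  assert (Hfip : forall l, Forall B l -> exists fs e, Forall Lmcf fs /\ 0 < e /\
     forall s, Forall (fun f => Cnorm (Csub (nu f) (f s)) < e) fs -> Forall (fun A => A s) l).
  { induction 1 as [|A l HA Hl IH].
    - exists nil, 1. split; auto. split; [lra|]. intros; constructor.
    - destruct HA as [f [e1 [Hf [He1 HA]]]]. destruct IH as [fs [e2 [Hfs [He2 IH]]]].
      exists (f :: fs), (Rmin e1 e2). split; [constructor; auto|]. split.
      apply Rmin_glb_lt; auto.
      intros s Hall. inversion Hall; subst. constructor.
      + apply HA. eapply Rlt_le_trans; [eauto|apply Rmin_l].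
      + apply IH. eapply Forall_impl; [|eauto]. intros g Hg; simpl in Hg.
        eapply Rlt_le_trans; [eauto|apply Rmin_r]. }
  destruct (UFM.uf_exists S B) as [U [HBU [HU1 [HU2 [HU3 HU4]]]]].
  { intros l Hl. destruct (Hfip l Hl) as [fs [e [Hfs [He H]]]].
    destruct (density nu fs e Hn Hfs He) as [s Hs]. exists s; auto. }
  assert (HU : isUF U) by (repeat split; auto).
  exists (uchar U (fun s => s)). split. apply uchar_ch; auto.
  intros f Hf. apply Cnorm_small_eq. intros e He.
  apply uchar_bound; auto. apply CB_bnd, Lmc_CB; auto.
  apply HU1 with (A := fun s => Cnorm (Csub (nu f) (f s)) < e).
  apply HBU. exists f, e. split; auto.
  intros s Hs. rewrite Cnorm_opp_sub; lra.
Qed.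

Lemma Tmu_add (A : (S -> C) -> Prop) m f g : is_character S A m -> (forall s h, Lmcf h -> A (Ls S op s h)) ->
  Lmcf f -> Lmcf g ->
  Tmu S op m (fun x => Cadd (f x) (g x)) = (fun s => Cadd (Tmu S op m f s) (Tmu S op m g s)).
Proof.
  intros Hm HA Hf Hg. apply functional_extensionality; intros s. unfold Tmu. apply Hm; apply HA; auto.
Qed.
Lemma Tmu_scal (A : (S -> C) -> Prop) m c f : is_character S A m -> (forall s h, Lmcf h -> A (Ls S op s h)) ->
  Lmcf f -> Tmu S op m (fun x => Cmul c (f x)) = (fun s => Cmul c (Tmu S op m f s)).
Proof.
  intros Hm HA Hf. apply functional_extensionality; intros s. unfold Tmu. apply Hm; apply HA; auto.
Qed.
Lemma Tmu_mul (A : (S -> C) -> Prop) m f g : is_character S A m -> (forall s h, Lmcf h -> A (Ls S op s h)) ->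
  Lmcf f -> Lmcf g ->
  Tmu S op m (fun x => Cmul (f x) (g x)) = (fun s => Cmul (Tmu S op m f s) (Tmu S op m g s)).
Proof.
  intros Hm HA Hf Hg. apply functional_extensionality; intros s. unfold Tmu. apply Hm; apply HA; auto.
Qed.
Lemma Tmu_one (A : (S -> C) -> Prop) m : is_character S A m -> (forall c, A (fun _ => c)) ->
  (forall c f, A f -> A (fun x => Cmul c (f x))) ->
  Tmu S op m (fun _ => C1) = (fun _ => C1).
Proof.
  intros Hm H1 H2. apply functional_extensionality; intros s. unfold Tmu, Ls.
  apply (ch_one S A m Hm H1 H2).
Qed.

Lemma HA_CB : forall s h, Lmcf h -> CBf (Ls S op s h).
Proof. intros; apply CB_Ls, Lmc_CB; auto. Qed.
Lemma HA_L : forall s h, Lmcf h -> Lmcf (Ls S op s h).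
Proof. intros; apply Lmc_Ls; auto. Qed.

Lemma comp_char (A : (S -> C) -> Prop) m m' : is_character S A m -> is_character S A m' ->
  (forall s h, Lmcf h -> A (Ls S op s h)) -> (forall c, A (fun _ => c)) ->
  (forall c f, A f -> A (fun x => Cmul c (f x))) ->
  (forall f, Lmcf f -> A (Tmu S op m f)) ->
  SL (fun g => m' (Tmu S op m g)).
Proof.
  intros Hm Hm' HA H1 H2 HT. split; [|split; [|split]].
  - intros f g Hf Hg. rewrite (Tmu_add A m f g); auto. apply Hm'; auto.
  - intros c f Hf. rewrite (Tmu_scal A m c f); auto. apply Hm'; auto.
  - intros f g Hf Hg. rewrite (Tmu_mul A m f g); auto. apply Hm'; auto.
  - exists (fun _ => C1). split; [apply Lmc_const|]. rewrite (Tmu_one A m); auto.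
    rewrite (ch_one S A m' Hm' H1 H2). apply C1_neq_C0.
Qed.

Lemma TSL_CB phi f : SL phi -> Lmcf f -> CBf (Tmu S op phi f).
Proof.
  intros Hp Hf. destruct (extend_char phi Hp) as [m [Hm Hmp]].
  apply (CB_ext (Tmu S op m f)). apply Lmc_T; auto.
  intros s. unfold Tmu. apply Hmp, Lmc_Ls; auto.
Qed.

Lemma TSL_Lmc phi f : SL phi -> Lmcf f -> Lmcf (Tmu S op phi f).
Proof.
  intros Hp Hf. split; [apply TSL_CB; auto|]. intros m' Hm'.
  destruct (extend_char phi Hp) as [m [Hm Hmp]].
  apply (CB_ext (Tmu S op (fun g => m' (Tmu S op m g)) f)).
  apply TSL_CB; auto. apply (comp_char CBf); auto. apply HA_CB. apply CB_const. apply CB_scal.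
  intros; apply Lmc_T; auto.
  intros s. unfold Tmu. f_equal. apply functional_extensionality; intros x.
  change (Ls S op s (fun s0 => phi (Ls S op s0 f)) x) with (phi (Ls S op (op s x) f)).
  rewrite <- (Hmp (Ls S op (op s x) f)) by (apply Lmc_Ls; auto).
  f_equal. apply functional_extensionality; intros y. unfold Ls. rewrite Hassoc; auto.
Qed.

Lemma SL_Lmc_mul mu nu : SL mu -> SL nu -> SL (Lmc_mul S op mu nu).
Proof.
  intros Hmu Hnu. unfold Lmc_mul. apply (comp_char Lmcf); auto.
  apply HA_L. apply Lmc_const. apply Lmc_scal. intros; apply TSL_Lmc; auto.
Qed.

Notation clE := (in_cl_eps S op open).

Lemma Forall_lt_mono (P : (S -> C) -> R) fs e e' : e <= e' ->
  Forall (fun f => P f < e) fs -> Forall (fun f => P f < e') fs.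
Proof. intros H. apply Forall_impl. intros; lra. Qed.

Lemma cl_ext A mu mu' : Lmc_eq S op open mu mu' -> clE A mu -> clE A mu'.
Proof.
  intros E H fs Hfs e He. destruct (H fs Hfs e He) as [a [Ha Hf]]. exists a; split; auto.
  rewrite Forall_forall in *. intros f Hin. rewrite <- E; auto.
Qed.

Lemma Lmc_eq_sym mu mu' : Lmc_eq S op open mu mu' -> Lmc_eq S op open mu' mu.
Proof. intros E f Hf; symmetry; auto. Qed.

Lemma cl_tail (y : nat -> S) nu : ~ (exists s, Lmc_eq S op open nu (eps_map S s)) ->
  clE (fun s => exists n, s = y n) nu -> forall k, clE (fun s => exists n, (k < n)%nat /\ s = y n) nu.
Proof.
  intros Hne Hcl k.
  assert (P : forall k, exists fs e, Forall Lmcf fs /\ 0 < e /\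
     forall j, (j <= k)%nat -> ~ Forall (fun f => Cnorm (Csub (nu f) (f (y j))) < e) fs).
  { intros k0. induction k0 as [|k0 IH].
    - assert (~ Lmc_eq S op open nu (eps_map S (y 0%nat))) by (intro; apply Hne; eauto).
      unfold Lmc_eq in H. apply not_all_ex_not in H. destruct H as [f Hf].
      apply imply_to_and in Hf. destruct Hf as [Hf Hneq].
      exists (f :: nil), (Cnorm (Csub (nu f) (f (y 0%nat)))). split; [constructor; auto|]. split.
      + pose proof (Cnorm_ge0 (Csub (nu f) (f (y 0%nat)))).
        destruct (Req_dec (Cnorm (Csub (nu f) (f (y 0%nat)))) 0); [|lra].
        exfalso; apply Hneq. apply Csub_eq0; auto.
      + intros j Hj HF. assert (j = 0%nat) by lia. subst. inversion HF; subst. simpl in H1. lra.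
    - destruct IH as [fs [e [Hfs [He IH]]]].
      assert (~ Lmc_eq S op open nu (eps_map S (y (Datatypes.S k0)))) by (intro; apply Hne; eauto).
      unfold Lmc_eq in H. apply not_all_ex_not in H. destruct H as [f Hf].
      apply imply_to_and in Hf. destruct Hf as [Hf Hneq].
      set (d := Cnorm (Csub (nu f) (f (y (Datatypes.S k0))))).
      assert (Hd : 0 < d).
      { unfold d. pose proof (Cnorm_ge0 (Csub (nu f) (f (y (Datatypes.S k0))))).
        destruct (Req_dec (Cnorm (Csub (nu f) (f (y (Datatypes.S k0))))) 0); [|lra].
        exfalso; apply Hneq. apply Csub_eq0; auto. }
      exists (f :: fs), (Rmin e d). split; [constructor; auto|]. split; [apply Rmin_glb_lt; auto|].
      intros j Hj HF. inversion HF; subst.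
      destruct (Nat.eq_dec j (Datatypes.S k0)) as [->|Hjk].
      + simpl in H1. pose proof (Rmin_r e d). fold d in H1. clearbody d. lra.
      + apply (IH j ltac:(lia)). eapply Forall_lt_mono; [|eauto]. apply Rmin_l. }
  destruct (P k) as [fs0 [e0 [Hfs0 [He0 H0]]]].
  intros fs Hfs e He.
  destruct (Hcl (fs ++ fs0) ltac:(apply Forall_app; auto) (Rmin e e0) ltac:(apply Rmin_glb_lt; auto))
    as [a [[n ->] Ha]].
  apply Forall_app in Ha. destruct Ha as [Ha1 Ha2].
  exists (y n). split.
  - exists n. split; auto. destruct (Nat.lt_ge_cases k n); auto. exfalso.
    apply (H0 n); auto. eapply Forall_lt_mono; [|eauto]. apply Rmin_r.
  - eapply Forall_lt_mono; [|eauto]. apply Rmin_l.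
Qed.

Lemma prod_cl (x y : nat -> S) mu nu : SL mu -> SL nu ->
  clE (fun s => exists n, s = x n) mu ->
  (forall k, clE (fun s => exists n, (k < n)%nat /\ s = y n) nu) ->
  clE (fun s => exists k n, (k < n)%nat /\ s = op (x k) (y n)) (Lmc_mul S op mu nu).
Proof.
  intros Hmu Hnu Hx Hy fs Hfs e He.
  destruct (Hx (map (Tmu S op nu) fs) ltac:(rewrite Forall_forall in *; intros g Hg;
     apply in_map_iff in Hg; destruct Hg as [f [<- Hf]]; apply TSL_Lmc; auto) (e/2) ltac:(lra))
    as [a [[k ->] Ha]].
  destruct (Hy k (map (Ls S op (x k)) fs) ltac:(rewrite Forall_forall in *; intros g Hg;
     apply in_map_iff in Hg; destruct Hg as [f [<- Hf]]; apply Lmc_Ls; auto) (e/2) ltac:(lra))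
    as [b [[n [Hkn ->]] Hb]].
  exists (op (x k) (y n)). split; [exists k, n; auto|].
  rewrite Forall_forall in *. intros f Hin.
  specialize (Ha (Tmu S op nu f) ltac:(apply in_map; auto)).
  specialize (Hb (Ls S op (x k) f) ltac:(apply in_map; auto)).
  unfold Lmc_mul, eps_map in *.
  change (Tmu S op nu f (x k)) with (nu (Ls S op (x k) f)) in Ha.
  change (Ls S op (x k) f (y n)) with (f (op (x k) (y n))) in Hb.
  pose proof (Cnorm_tri (mu (Tmu S op nu f)) (nu (Ls S op (x k) f)) (f (op (x k) (y n)))). lra.
Qed.

Lemma rhs_to_lhs (x y : nat -> S) :
  SLmc_commutative S op open ->
  unbounded_seq S op open x -> unbounded_seq S op open y ->
  exists mu, SL mu /\
    clE (fun s => exists k n, (k < n)%nat /\ s = op (x k) (y n)) mu /\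
    clE (fun s => exists k n, (k < n)%nat /\ s = op (y k) (x n)) mu.
Proof.
  intros Hc [mu [[Hmu Hmu'] Hmux]] [nu [[Hnu Hnu'] Hnuy]].
  exists (Lmc_mul S op mu nu). split; [apply SL_Lmc_mul; auto|]. split.
  - apply prod_cl; auto. apply cl_tail; auto.
  - apply (cl_ext _ (Lmc_mul S op nu mu)). apply Lmc_eq_sym, Hc; auto.
    apply prod_cl; auto. apply cl_tail; auto.
Qed.

Lemma nat_uf : exists U : (nat -> Prop) -> Prop, isUF U /\ forall k, U (fun n => (k < n)%nat).
Proof.
  set (B := fun A : nat -> Prop => exists k, forall n, (k < n)%nat -> A n).
  assert (Hfip : forall l, Forall B l -> exists k, forall n, (k < n)%nat -> Forall (fun A => A n) l).
  { induction 1 as [|A l [k1 H1] Hl [k2 H2]].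
    - exists 0%nat. intros; constructor.
    - exists (Nat.max k1 k2). intros n Hn. constructor; [apply H1|apply H2]; lia. }
  destruct (UFM.uf_exists nat B) as [U [HBU [HU1 [HU2 [HU3 HU4]]]]].
  { intros l Hl. destruct (Hfip l Hl) as [k Hk]. exists (Datatypes.S k). apply Hk. lia. }
  exists U. split. repeat split; auto.
  intros k. apply HBU. exists k; auto.
Qed.

Lemma uchar_cl {T} (U : (T -> Prop) -> Prop) (p : T -> S) : isUF U ->
  clE (fun s => exists t, s = p t) (uchar U p).
Proof.
  intros HU fs Hfs e He.
  assert (H : U (fun t => Forall (fun f => Cnorm (Csub (uchar U p f) (f (p t))) < e) fs)).
  { induction Hfs as [|f fs Hf Hfs IH].
    - apply (UF_mono _ _ HU _ _ (UF_full _ _ HU)). intros; constructor.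
    - pose proof (uchar_spec U p f HU (CB_bnd f (Lmc_CB f Hf)) e He) as Hl.
      apply (UF_mono _ _ HU _ _ (UF_and _ _ HU _ _ Hl IH)). intros t [A1 A2].
      constructor; auto. rewrite Cnorm_opp_sub; auto. }
  destruct (UF_ex _ _ HU _ H) as [t Ht]. exists (p t). split; [exists t; auto|]. exact Ht.
Qed.

Lemma construct mu nu f d : SL mu -> SL nu -> Lmcf f -> 0 < d ->
  exists x y : nat -> S,
    (forall k n, (k < n)%nat -> Cnorm (Csub (mu (Tmu S op nu f)) (f (op (x k) (y n)))) < 2 * d) /\
    (forall k n, (k < n)%nat -> Cnorm (Csub (nu (Tmu S op mu f)) (f (op (y k) (x n)))) < 2 * d).
Proof.
  intros Hmu Hnu Hf Hd.
  set (good := fun (h : list (S * S)) (pq : S * S) =>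
    Cnorm (Csub (mu (Tmu S op nu f)) (Tmu S op nu f (fst pq))) < d /\
    Cnorm (Csub (nu (Tmu S op mu f)) (Tmu S op mu f (snd pq))) < d /\
    forall pr, In pr h -> Cnorm (Csub (mu (Ls S op (snd pr) f)) (f (op (snd pr) (fst pq)))) < d /\
                          Cnorm (Csub (nu (Ls S op (fst pr) f)) (f (op (fst pr) (snd pq)))) < d).
  assert (Hex : forall h, exists pq, good h pq).
  { intros h.
    destruct (density mu (Tmu S op nu f :: map (fun pr => Ls S op (snd pr) f) h) d Hmu) as [p Hp]; auto.
    { constructor. apply TSL_Lmc; auto. rewrite Forall_forall. intros g Hg. apply in_map_iff in Hg.
      destruct Hg as [pr [<- _]]. apply Lmc_Ls; auto. }
    destruct (density nu (Tmu S op mu f :: map (fun pr => Ls S op (fst pr) f) h) d Hnu) as [q Hq]; auto.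
    { constructor. apply TSL_Lmc; auto. rewrite Forall_forall. intros g Hg. apply in_map_iff in Hg.
      destruct Hg as [pr [<- _]]. apply Lmc_Ls; auto. }
    exists (p, q). inversion Hp as [|? ? Hp1 Hp2]; subst. inversion Hq as [|? ? Hq1 Hq2]; subst.
    split; [exact Hp1|split; [exact Hq1|]]. intros pr Hin. rewrite Forall_forall in Hp2, Hq2. split.
    - exact (Hp2 (Ls S op (snd pr) f) (in_map (fun pr => Ls S op (snd pr) f) h pr Hin)).
    - exact (Hq2 (Ls S op (fst pr) f) (in_map (fun pr => Ls S op (fst pr) f) h pr Hin)). }
  set (G := fun h => proj1_sig (constructive_indefinite_description _ (Hex h))).
  assert (HG : forall h, good h (G h)) by (intros h; exact (proj2_sig (constructive_indefinite_description _ (Hex h)))).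
  set (hist := fix hist (n : nat) : list (S * S) := match n with O => nil | Datatypes.S n' => hist n' ++ G (hist n') :: nil end).
  assert (Hin : forall k n, (k < n)%nat -> In (G (hist k)) (hist n)).
  { intros k n; induction n as [|n IH]; intros Hkn; [lia|].
    change (hist (Datatypes.S n)) with (hist n ++ G (hist n) :: nil). apply in_or_app.
    destruct (Nat.eq_dec k n) as [->|Hne]; [right; left; auto|left; apply IH; lia]. }
  exists (fun n => fst (G (hist n))), (fun n => snd (G (hist n))). split.
  - intros k n Hkn. destruct (HG (hist k)) as [H1 _]. destruct (HG (hist n)) as [_ [_ H3]].
    destruct (H3 _ (Hin k n Hkn)) as [_ H4].
    change (Tmu S op nu f (fst (G (hist k)))) with (nu (Ls S op (fst (G (hist k))) f)) in H1.
    pose proof (Cnorm_tri (mu (Tmu S op nu f)) (nu (Ls S op (fst (G (hist k))) f)) (f (op (fst (G (hist k))) (snd (G (hist n)))))).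
    lra.
  - intros k n Hkn. destruct (HG (hist k)) as [_ [H1 _]]. destruct (HG (hist n)) as [_ [_ H3]].
    destruct (H3 _ (Hin k n Hkn)) as [H4 _].
    change (Tmu S op mu f (snd (G (hist k)))) with (mu (Ls S op (snd (G (hist k))) f)) in H1.
    pose proof (Cnorm_tri (nu (Tmu S op mu f)) (mu (Ls S op (snd (G (hist k))) f)) (f (op (snd (G (hist k))) (fst (G (hist n)))))).
    lra.
Qed.

Lemma lhs_to_rhs : (forall a b, op a b = op b a) -> ~ SLmc_commutative S op open ->
  exists x y : nat -> S,
    unbounded_seq S op open x /\ unbounded_seq S op open y /\
    ~ (exists mu, SL mu /\
         clE (fun s => exists k n, (k < n)%nat /\ s = op (x k) (y n)) mu /\
         clE (fun s => exists k n, (k < n)%nat /\ s = op (y k) (x n)) mu).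
Proof.
  intros Hcomm Hnc.
  assert (Hex : exists mu nu f, SL mu /\ SL nu /\ Lmcf f /\ mu (Tmu S op nu f) <> nu (Tmu S op mu f)).
  { apply NNPP; intro H. apply Hnc. intros mu nu Hmu Hnu f Hf. apply NNPP; intro Hn.
    apply H; exists mu, nu, f; auto. }
  destruct Hex as [mu [nu [f [Hmu [Hnu [Hf Hab]]]]]].
  remember (mu (Tmu S op nu f)) as a eqn:Ea.
  remember (nu (Tmu S op mu f)) as b eqn:Eb.
  assert (HD : 0 < Cnorm (Csub a b)).
  { pose proof (Cnorm_ge0 (Csub a b)). destruct (Req_dec (Cnorm (Csub a b)) 0) as [E|]; [|lra].
    exfalso; apply Hab, Csub_eq0; auto. }
  remember (Cnorm (Csub a b) / 8) as d eqn:Ed.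
  assert (Hd : 0 < d) by (subst d; lra).
  destruct (construct mu nu f d Hmu Hnu Hf Hd) as [x [y [Bx By]]].
  rewrite <- Ea in Bx. rewrite <- Eb in By.
  exists x, y.
  destruct nat_uf as [U [HU Htail]].
  set (chi := uchar U x). set (chi' := uchar U y).
  assert (Hchi : chCB chi) by (apply uchar_ch; auto).
  assert (Hchi' : chCB chi') by (apply uchar_ch; auto).
  assert (Bf : forall g, Lmcf g -> bounded_C S g) by (intros; apply CB_bnd, Lmc_CB; auto).
  assert (All1 : forall k, Cnorm (Csub (chi' (Ls S op (x k) f)) a) <= 2 * d).
  { intros k. apply (uchar_bound U y); auto. apply Bf, Lmc_Ls; auto.
    apply (UF_mono _ _ HU _ _ (Htail k)). intros n Hn. unfold Ls. rewrite Cnorm_opp_sub.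
    apply Rlt_le, Bx; auto. }
  assert (All2 : forall k, Cnorm (Csub (chi (Ls S op (y k) f)) b) <= 2 * d).
  { intros k. apply (uchar_bound U x); auto. apply Bf, Lmc_Ls; auto.
    apply (UF_mono _ _ HU _ _ (Htail k)). intros n Hn. unfold Ls. rewrite Cnorm_opp_sub.
    apply Rlt_le, By; auto. }
  split; [|split].
  - exists chi. split; [split; [apply chCB_SL; auto|]|apply uchar_cl; auto].
    intros [s Hs].
    set (T' := Tmu S op chi' f).
    assert (HT' : Lmcf T') by (apply TSL_Lmc; auto; apply chCB_SL; auto).
    assert (A1 : Cnorm (Csub (chi T') a) <= 2 * d).
    { apply (uchar_bound U x); auto. apply (UF_mono _ _ HU _ _ (UF_full _ _ HU)).
      intros t _. apply All1. }
    assert (A2 : chi T' = chi' (Ls S op s f)) by (rewrite (Hs T' HT'); reflexivity).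
    assert (A3 : Cnorm (Csub (chi' (Ls S op s f)) b) <= 2 * d).
    { apply (uchar_bound U y); auto. apply Bf, Lmc_Ls; auto.
      apply (UF_mono _ _ HU _ _ (UF_full _ _ HU)). intros n _.
      change (Ls S op s f (y n)) with (f (op s (y n))). rewrite Hcomm.
      change (f (op (y n) s)) with (eps_map S s (Ls S op (y n) f)).
      rewrite <- (Hs (Ls S op (y n) f)) by (apply Lmc_Ls; auto). apply All2. }
    rewrite A2 in A1. pose proof (Cnorm_tri a (chi' (Ls S op s f)) b).
    rewrite (Cnorm_opp_sub a (chi' (Ls S op s f))) in H. subst d. clearbody T' chi chi'. lra.
  - exists chi'. split; [split; [apply chCB_SL; auto|]|apply uchar_cl; auto].
    intros [t Ht].
    set (T := Tmu S op chi f).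
    assert (HT : Lmcf T) by (apply TSL_Lmc; auto; apply chCB_SL; auto).
    assert (B1 : Cnorm (Csub (chi' T) b) <= 2 * d).
    { apply (uchar_bound U y); auto. apply (UF_mono _ _ HU _ _ (UF_full _ _ HU)).
      intros k _. apply All2. }
    assert (B2 : chi' T = chi (Ls S op t f)) by (rewrite (Ht T HT); reflexivity).
    assert (B3 : Cnorm (Csub (chi (Ls S op t f)) a) <= 2 * d).
    { apply (uchar_bound U x); auto. apply Bf, Lmc_Ls; auto.
      apply (UF_mono _ _ HU _ _ (UF_full _ _ HU)). intros n _.
      change (Ls S op t f (x n)) with (f (op t (x n))). rewrite Hcomm.
      change (f (op (x n) t)) with (eps_map S t (Ls S op (x n) f)).
      rewrite <- (Ht (Ls S op (x n) f)) by (apply Lmc_Ls; auto). apply All1. }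
    rewrite B2 in B1. pose proof (Cnorm_tri a (chi (Ls S op t f)) b).
    rewrite (Cnorm_opp_sub a (chi (Ls S op t f))) in H. subst d. clearbody T chi chi'. lra.
  - intros [rho [Hrho [H1 H2]]].
    destruct (H1 (f :: nil) ltac:(constructor; auto) d Hd) as [s1 [[k1 [n1 [Hk1 ->]]] F1]].
    destruct (H2 (f :: nil) ltac:(constructor; auto) d Hd) as [s2 [[k2 [n2 [Hk2 ->]]] F2]].
    inversion F1 as [|? ? G1 _]. inversion F2 as [|? ? G2 _].
    unfold eps_map in G1, G2.
    specialize (Bx k1 n1 Hk1). specialize (By k2 n2 Hk2).
    pose proof (Cnorm_tri a (f (op (x k1) (y n1))) (rho f)) as T1.
    pose proof (Cnorm_tri a (rho f) (f (op (y k2) (x n2)))) as T2.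
    pose proof (Cnorm_tri a (f (op (y k2) (x n2))) b) as T3.
    rewrite (Cnorm_opp_sub (f (op (x k1) (y n1)))) in T1.
    rewrite (Cnorm_opp_sub (f (op (y k2) (x n2))) b) in T3.
    clearbody chi chi'. lra.
Qed.

End Main.

Theorem theorem4p5 (S : Type) (op : S -> S -> S) (open : (S -> Prop) -> Prop)
  (HS : hausdorff_semitopological_semigroup S op open)
  (Hcomm : commutative S op) :
  ~ SLmc_commutative S op open <->
  exists x y : nat -> S,
    unbounded_seq S op open x /\ unbounded_seq S op open y /\
    ~ (exists mu, SLmc S op open mu /\
         in_cl_eps S op open (fun s => exists k n, (k < n)%nat /\ s = op (x k) (y n)) mu /\
         in_cl_eps S op open (fun s => exists k n, (k < n)%nat /\ s = op (y k) (x n)) mu).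
Proof.
  destruct HS as [Htop [_ [Hassoc [Hlc _]]]].
  split.
  - intros Hnc. apply (lhs_to_rhs S op open Htop Hassoc Hlc Hcomm Hnc).
  - intros [x [y [Hx [Hy Hn]]]] Hc. apply Hn. apply (rhs_to_lhs S op open Htop Hassoc Hlc x y Hc Hx Hy).
Qed.
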